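(* Let $r,k\in\mathbb Z$ with $0\le k\le r$, and suppose Assumption (A1) holds. Then there is a constant $\kappa_{r,k}>0$, independent of $\tau_n$ and $n$, such that for all $\varphi\in P_r(I_n,\mathbb R^d)$ $$\int_{I_n}\|\varphi'(t)\|\,dt\le\tau_n\sup_{t\in I_n}\|\varphi'(t)\|\le\kappa_{r,k}\Big(\sum_{i=1}^{\lfloor (k-1)/2\rfloor}\big(\tfrac{\tau_n}{2}\big)^i\|\varphi^{(i)}(t_{n-1}^+)\|+\sum_{i=1}^{\lfloor k/2\rfloor}\big(\tfrac{\tau_n}{2}\big)^i\|\varphi^{(i)}(t_n^-)\|+\sum_{i=\delta_{0,k}}^{r-k}\Big\|\mathscr I_n\big[\varphi'(t)(1+T_n^{-1}(t))^i\big]\Big\|\Big)$$ and $$\sup_{t\in I_n}\|\varphi(t)\|\le\min\{\|\varphi(t_{n-1}^+)\|,\|\varphi(t_n^-)\|\}+\int_{I_n}\|\varphi'(t)\|\,dt.$$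
   Context: Mesh: $t_0<t_1<\dots<t_N$, $I_n=(t_{n-1},t_n]$, $\tau_n=t_n-t_{n-1}\le1$; $v(t_n^\pm)$ denote one-sided limits. $T_n(\hat t)=\frac{t_n+t_{n-1}}{2}+\frac{\tau_n}{2}\hat t$ maps $(-1,1]$ onto $I_n$. $\|\cdot\|$ is the Euclidean norm on $\mathbb R^d$; $P_s$ denotes polynomials of degree at most $s$; $\delta_{i,j}$ is the Kronecker symbol; empty sums are zero. $\widehat{\mathscr I}$ is a linear functional (reference integrator) on $C^{k_{\mathscr I}}([-1,1])$ and its local version is $\mathscr I_n[\varphi]=\frac{\tau_n}{2}\widehat{\mathscr I}[\varphi\circ T_n]$, acting componentwise on vector-valued functions. Assumption (A1): whenever $\hat\psi\in P_{r-\max\{1,k\}}([-1,1])$ satisfies $\widehat{\mathscr I}\big[(1-\hat t)^{\lfloor k/2\rfloor}(1+\hat t)^{|\lfloor (k-1)/2\rfloor|}\hat\psi\,\hat\varphi\big]=0$ for all $\hat\varphi\in P_{r-\max\{1,k\}}([-1,1])$, then $\hat\psi\equiv0$. *)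

(* Defs.v *)
From HB Require Import structures.
From mathcomp Require Import all_boot all_order all_algebra.
From mathcomp Require Import all_classical all_reals all_analysis.
Set Implicit Arguments. Unset Strict Implicit. Unset Printing Implicit Defensive.
Import Order.TTheory GRing.Theory Num.Theory.
Import numFieldNormedType.Exports.
Local Open Scope ring_scope.

Section Defs.
Variable R : realType.

(* floor (z / 2) for an integer z (intdiv's %/ by a positive divisor is floor) *)
Definition floor2 (z : int) : int := (z %/ 2)%Z.

(* nonnegative part of an integer, used as the upper bound of a sum
   \sum_{i=1}^{z}, which is empty when z < 1 *)
Definition posn (z : int) : nat := match z with Posz n => n | Negz _ => 0%N end.

(* p ∈ P_s  (s : int; P_s = {0} for s < 0) *)
Definition inP (s : int) (p : {poly R}) : bool := ((size p)%:Z <= s + 1)%R.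

Definition enorm (d : nat) (v : 'I_d -> R) : R := Num.sqrt (\sum_(j < d) v j ^+ 2).

(* T_n(that) = (a+b)/2 + (b-a)/2 * that, mapping (-1,1] onto (a,b] *)
Definition Tmap (a b : R) : {poly R} := ((a + b) / 2)%:P + ((b - a) / 2)%:P * 'X.
Definition Tinv (a b : R) : {poly R} := (2 / (b - a))%:P * ('X - ((a + b) / 2)%:P).

(* local integrator I_n[f] = tau_n/2 * Ihat[f o T_n] *)
Definition locI (Ihat : {poly R} -> R) (a b : R) (f : {poly R}) : R :=
  (b - a) / 2 * Ihat (f \Po Tmap a b).

Definition A1 (Ihat : {poly R} -> R) (r k : nat) : Prop :=
  let s : int := r%:Z - Num.max 1 k%:Z in
  let w : {poly R} := (1 - 'X) ^+ k./2 * (1 + 'X) ^+ `|floor2 (k%:Z - 1)| in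
  forall psi : {poly R}, inP s psi ->
    (forall phi : {poly R}, inP s phi -> Ihat (w * psi * phi) = 0) -> psi = 0.

Definition evalv (d : nat) (phi : 'I_d -> {poly R}) (t : R) : 'I_d -> R :=
  fun j => (phi j).[t].
Definition derivv (d : nat) (phi : 'I_d -> {poly R}) (i : nat) : 'I_d -> {poly R} :=
  fun j => (phi j)^`(i).

End Defs.

(* Main.v *)
Require Import Defs.
From HB Require Import structures.
From mathcomp Require Import all_boot all_order all_algebra.
From mathcomp Require Import all_classical all_reals all_analysis.
From mathcomp Require Import ring lra zify.
Import Order.TTheory GRing.Theory Num.Theory.
Import numFieldNormedType.Exports.
Local Open Scope classical_set_scope.
Local Open Scope ring_scope.
Set Implicit Arguments. Unset Strict Implicit. Unset Printing Implicit Defensive.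
Section Enorm.
Variable R : realType.
Implicit Types (d : nat).

Lemma enorm_ge0 d (v : 'I_d -> R) : 0 <= enorm v.
Proof. exact: sqrtr_ge0. Qed.

Lemma sumsq_ge0 d (v : 'I_d -> R) : 0 <= \sum_(j < d) v j ^+ 2.
Proof. by apply: sumr_ge0 => j _; exact: sqr_ge0. Qed.

Lemma enorm_sq d (v : 'I_d -> R) : enorm v ^+ 2 = \sum_(j < d) v j ^+ 2.
Proof. by rewrite /enorm sqr_sqrtr // sumsq_ge0. Qed.

Lemma eq_enorm d (u v : 'I_d -> R) : (forall j, u j = v j) -> enorm u = enorm v.
Proof. by move=> h; rewrite /enorm; congr Num.sqrt; apply: eq_bigr => j _; rewrite h. Qed.

Lemma enormZ d (c : R) (v : 'I_d -> R) : enorm (fun j => c * v j) = `|c| * enorm v.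
Proof.
rewrite /enorm (eq_bigr (fun j => c ^+ 2 * v j ^+ 2)); last by move=> j _; rewrite exprMn.
by rewrite -mulr_sumr sqrtrM ?sqr_ge0 // sqrtr_sqr.
Qed.

Lemma enorm0 d : enorm (fun _ : 'I_d => 0 : R) = 0.
Proof. by rewrite /enorm big1 ?sqrtr0 // => j _; rewrite expr0n. Qed.

Lemma enorm_eq0 d (v : 'I_d -> R) : enorm v = 0 -> forall j, v j = 0.
Proof.
move=> h j; have h2 : \sum_(j < d) v j ^+ 2 = 0 by rewrite -enorm_sq h expr0n.
have := @psumr_eq0P _ _ _ _ (fun i _ => sqr_ge0 (v i)) h2 j isT.
by move/eqP; rewrite sqrf_eq0 => /eqP.
Qed.

Lemma enorm_CS d (u v : 'I_d -> R) : \sum_(j < d) u j * v j <= enorm u * enorm v.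
Proof.
set A := enorm u; set B := enorm v; set S := \sum_(j < d) u j * v j.
have [A0|Apos] := eqVneq A 0.
  rewrite /S big1 ?A0 ?mul0r // => j _; by rewrite (enorm_eq0 A0) mul0r.
have [B0|Bpos] := eqVneq B 0.
  rewrite /S big1 ?B0 ?mulr0 // => j _; by rewrite (enorm_eq0 B0) mulr0.
have A0' : 0 < A by rewrite lt_def Apos enorm_ge0.
have B0' : 0 < B by rewrite lt_def Bpos enorm_ge0.
have h : 0 <= \sum_(j < d) (B * u j - A * v j) ^+ 2 by apply: sumr_ge0 => j _; exact: sqr_ge0.
have e : \sum_(j < d) (B * u j - A * v j) ^+ 2 =
   B ^+ 2 * (\sum_(j < d) u j ^+ 2) + A ^+ 2 * (\sum_(j < d) v j ^+ 2) - 2 * A * B * S.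
  rewrite /S !mulr_sumr -big_split /= -sumrB; apply: eq_bigr => j _; ring.
rewrite e -!enorm_sq -/A -/B in h.
have : 0 <= A * B * (A * B - S) by nra.
rewrite pmulr_rge0 ?mulr_gt0 // subr_ge0 //.
Qed.

Lemma enormD d (u v : 'I_d -> R) : enorm (fun j => u j + v j) <= enorm u + enorm v.
Proof.
have h1 := enorm_CS u v.
rewrite -(ler_pXn2r (n := 2)) //; last first.
- by rewrite nnegrE addr_ge0 ?enorm_ge0.
- by rewrite nnegrE enorm_ge0.
rewrite enorm_sq (eq_bigr (fun j => u j ^+ 2 + v j ^+ 2 + 2 * (u j * v j))); last by move=> j _; ring.
rewrite !big_split /= -mulr_sumr -!enorm_sq.
suff : 2 * (\sum_(j < d) u j * v j) <= 2 * (enorm u * enorm v) by move=> h; lra.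
by rewrite ler_pM2l.
Qed.

Lemma enorm_sum d (I : Type) (s : seq I) (F : I -> 'I_d -> R) :
  enorm (fun j => \sum_(l <- s) F l j) <= \sum_(l <- s) enorm (F l).
Proof.
elim: s => [|x s IH].
  by rewrite big_nil (eq_enorm (v := fun _ => 0)) ?enorm0 // => j; rewrite big_nil.
rewrite big_cons (eq_enorm (v := fun j => F x j + \sum_(l <- s) F l j)); last first.
  by move=> j; rewrite big_cons.
by apply: le_trans (enormD _ _) _; rewrite lerD2l.
Qed.

End Enorm.
Section NormEq.
Variable R : realType.

Definition islin (L : {poly R} -> R) :=
  forall (c : R) (p q : {poly R}), L (c *: p + q) = c * L p + L q.

Lemma islin0 L : islin L -> L 0 = 0.
Proof.
move=> h; have := h 1 0 0; rewrite scaler0 addr0 mul1r => e; lra.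
Qed.

Lemma islinZ L c p : islin L -> L (c *: p) = c * L p.
Proof. by move=> h; rewrite -[c *: p]addr0 h islin0 // addr0. Qed.

Lemma islinD L p q : islin L -> L (p + q) = L p + L q.
Proof. by move=> h; rewrite -[p]scale1r h mul1r scale1r. Qed.

Lemma islin_sum L (I : Type) (s : seq I) (F : I -> {poly R}) :
  islin L -> L (\sum_(i <- s) F i) = \sum_(i <- s) L (F i).
Proof.
move=> h; apply: (big_ind2 (fun a b => L a = b)) => //; first exact: islin0.
by move=> x1 x2 y1 y2 <- <-; rewrite islinD.
Qed.

Definition L0 : {poly R} -> R := fun _ => 0.

Lemma In_nth (Ls : seq ({poly R} -> R)) L : List.In L Ls ->
  exists l, (l < size Ls)%N /\ nth L0 Ls l = L.
Proof.
elim: Ls => [//|L' Ls IH] /= [->|/IH [l [hl e]]]; first by exists 0%N.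
by exists l.+1.
Qed.

Lemma nth_In (Ls : seq ({poly R} -> R)) l : (l < size Ls)%N -> List.In (nth L0 Ls l) Ls.
Proof.
elim: Ls l => [//|L' Ls IH] [|l] /=; first by left.
by move=> h; right; exact: IH.
Qed.

Lemma normeq (n : nat) (Ls : seq ({poly R} -> R)) :
  (forall L, List.In L Ls -> islin L) ->
  (forall p : {poly R}, (size p <= n)%N -> (forall L, List.In L Ls -> L p = 0) -> p = 0) ->
  exists C : R, 0 <= C /\ forall d (q : 'I_d -> {poly R}), (forall j, size (q j) <= n)%N ->
   forall x : R, `|x| <= 1 ->
     enorm (evalv q x) <= C * \sum_(L <- Ls) enorm (fun j => L (q j)).
Proof.
move=> hlin hinj.
set m := size Ls.
pose Ln (l : 'I_m) := nth L0 Ls l.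
have linL (l : 'I_m) : islin (Ln l) by apply: hlin; apply: nth_In.
pose M : 'M[R]_(n, m) := \matrix_(i, l) Ln l ('X^i).
pose pc (c : 'rV[R]_n) : {poly R} := \poly_(i < n) oapp (c 0) 0 (insub i).
have pcE c : pc c = \sum_(i < n) c 0 i *: 'X^i.
  by rewrite /pc poly_def; apply: eq_bigr => i _; rewrite valK.
have cM c l : (c *m M) 0 l = Ln l (pc c).
  rewrite !mxE pcE islin_sum //; apply: eq_bigr => i _.
  by rewrite mxE islinZ.
have inj (c : 'rV[R]_n) : c *m M = 0 -> c = 0.
  move=> h; have : pc c = 0.
    apply: hinj; first exact: size_poly.
    move=> L /In_nth [l [hl <-]].
    by have := cM c (Ordinal hl); rewrite h mxE.
  move=> e; apply/rowP => i; rewrite !mxE.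
  have := congr1 (fun p : {poly R} => p`_i) e; rewrite coef_poly ltn_ord valK coef0.
  by [].
have rf : row_free M.
  rewrite -kermx_eq0; apply/eqP/row_matrixP => i; rewrite row0.
  apply: inj; apply/sub_kermxP; exact: row_sub.
have [B hB] := row_freeP rf.
pose C := \sum_(l < m) \sum_(i < n) `|B l i|.
exists C; split.
  by apply: sumr_ge0 => l _; apply: sumr_ge0 => i _.
move=> d q hq x hx.
pose g (l : 'I_m) := \sum_(i < n) B l i * x ^+ i.
pose c (j : 'I_d) : 'rV[R]_n := \row_i (q j)`_i.
have qc j : q j = pc (c j).
  apply/polyP => i; rewrite coef_poly.
  case: ifP => hi; first by have -> : i = val (Ordinal hi) by []; rewrite valK /= mxE.
  by rewrite nth_default // (leq_trans (hq j)) // leqNgt hi.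
have coefq j (i : 'I_n) : (q j)`_i = \sum_(l < m) Ln l (q j) * B l i.
  have e : c j = c j *m M *m B by rewrite -mulmxA hB mulmx1.
  have := congr1 (fun A : 'rV_n => A 0 i) e; rewrite /= [in X in X = _]mxE => ->.
  rewrite mxE; apply: eq_bigr => l _; by rewrite cM -qc.
have ev j : evalv q x j = \sum_(l < m) g l * Ln l (q j).
  rewrite /evalv (horner_coef_wide _ (hq j)).
  under eq_bigr do rewrite coefq mulr_suml.
  rewrite exchange_big /=; apply: eq_bigr => l _.
  rewrite /g mulr_suml; apply: eq_bigr => i _; ring.
have gC l : `|g l| <= C.
  apply: le_trans (ler_norm_sum _ _ _) _.
  apply: (@le_trans _ _ (\sum_(i < n) `|B l i|)).
    apply: ler_sum => i _; rewrite normrM normrX.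
    rewrite ler_piMr //; apply: exprn_ile1 => //.
  rewrite /C (bigD1 l) //= lerDl; apply: sumr_ge0 => l' _; apply: sumr_ge0 => i _.
  done.
rewrite (eq_enorm (v := fun j => \sum_(l <- enum 'I_m) g l * Ln l (q j))); last first.
  by move=> j; rewrite ev big_enum.
apply: le_trans (enorm_sum _ _) _.
rewrite (big_nth L0) big_mkord big_enum mulr_sumr /=.
apply: ler_sum => l _; rewrite enormZ ler_wpM2r ?enorm_ge0 //.
Qed.

End NormEq.
Section Roots.
Variable R : realType.

Lemma derivn_mulXsubC (q : {poly R}) (c : R) i :
  (q * ('X - c%:P))^`(i.+1) = q^`(i) *+ i.+1 + q^`(i.+1) * ('X - c%:P).
Proof.
elim: i => [|i IH].
  by rewrite derivn1 derivM derivXsubC mulr1 derivn0 addrC derivn1.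
rewrite derivnS IH derivD derivMn derivM derivXsubC mulr1 -!derivnS.
rewrite [in RHS]mulrSr; set A := q^`(i.+1); set B := q^`(i.+2) * _.
by rewrite -!addrA [B + A]addrC.
Qed.

Lemma dvd_derivs m (c : R) (p : {poly R}) :
  (forall i, (i < m)%N -> p^`(i).[c] = 0) -> exists s, p = s * ('X - c%:P) ^+ m.
Proof.
elim: m p => [|m IH] p h; first by exists p; rewrite expr0 mulr1.
have : root p c by rewrite /root -[p]derivn0 h.
case/factor_theorem => q1 e.
have h1 : forall i, (i < m)%N -> q1^`(i).[c] = 0.
  move=> i hi; have := h i.+1 hi; rewrite e derivn_mulXsubC hornerD hornerM.
  rewrite hornerXsubC subrr mulr0 addr0 hornerMn -mulr_natr => /eqP.
  by rewrite mulf_eq0 pnatr_eq0 orbF => /eqP.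
have [s es] := IH q1 h1; exists s; by rewrite e es exprSr mulrA.
Qed.

End Roots.

Section Inj.
Variable R : realType.
Variable Ihat : {poly R} -> R.
Hypothesis Ihat_lin : islin Ihat.
Variables r k : nat.
Hypothesis hkr : (k <= r)%N.
Hypothesis hA1 : A1 Ihat r k.

Definition m1 : nat := posn (floor2 (k%:Z - 1)).
Definition m2 : nat := k./2.
Definition ee : nat := (k == 0%N).

Lemma m12e : (m1 + m2 + 1 = k + ee)%N.
Proof.
rewrite /m1 /m2 /ee; case: k => [//|k'].
have -> : (k'.+1%:Z - 1 = k'%:Z)%R by rewrite -addn1 PoszD addrK.
rewrite /floor2 divz_nat /= uphalfE -divn2; lia.
Qed.

Lemma absfl : `|floor2 (k%:Z - 1)|%N = (m1 + ee)%N.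
Proof.
rewrite /m1 /ee; case: k => [//|k'].
have -> : (k'.+1%:Z - 1 = k'%:Z)%R by rewrite -addn1 PoszD addrK.
by rewrite /floor2 divz_nat /= addn0.
Qed.

Lemma maxk : Num.max 1 k%:Z = (k + ee)%N%:Z.
Proof. rewrite /ee; case: k => [//|k'] /=; by rewrite addn0 max_r // lez_nat. Qed.

Definition F1 (i : nat) (q : {poly R}) : R := (q^`(i.-1)).[-1].
Definition F2 (i : nat) (q : {poly R}) : R := (q^`(i.-1)).[1].
Definition F3 (i : nat) (q : {poly R}) : R := Ihat (q * (1 + 'X) ^+ i).

Definition Ls : seq ({poly R} -> R) :=
  map F1 (index_iota 1 m1.+1) ++ map F2 (index_iota 1 m2.+1) ++ map F3 (index_iota ee (r - k).+1).

Lemma Ls_lin L : List.In L Ls -> islin L.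
Proof.
rewrite /Ls !List.in_app_iff !List.in_map_iff.
case=> [[i [<- _]]|[[i [<- _]]|[i [<- _]]]] c p q.
- by rewrite /F1 !derivnD derivnZ hornerD hornerZ.
- by rewrite /F2 !derivnD derivnZ hornerD hornerZ.
- by rewrite /F3 mulrDl -scalerAl Ihat_lin.
Qed.

Lemma In_iota (i m n : nat) : (m <= i < n)%N -> List.In i (index_iota m n).
Proof.
rewrite -mem_index_iota; elim: (index_iota m n) => [//|x s IH].
by rewrite inE => /orP [/eqP ->|/IH]; [left|right].
Qed.

Lemma In_map (A B : Type) (f : A -> B) (x : A) (s : seq A) :
  List.In x s -> List.In (f x) (map f s).
Proof. elim: s => [//|y s IH] /= [->|/IH]; [left|right]. done. done. Qed.

Lemma XaddN1 : 'X - (-1)%:P = 1 + 'X :> {poly R}.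
Proof. by rewrite polyCN opprK addrC. Qed.

Lemma Ls_inj (q : {poly R}) : (size q <= r)%N -> (forall L, List.In L Ls -> L q = 0) -> q = 0.
Proof.
move=> hsz hL.
have h1 : forall i, (i < m1)%N -> q^`(i).[-1] = 0.
  move=> i hi; apply: (hL (F1 i.+1)).
  rewrite /Ls List.in_app_iff; left; apply: In_map; apply: In_iota; lia.
have h2 : forall i, (i < m2)%N -> q^`(i).[1] = 0.
  move=> i hi; apply: (hL (F2 i.+1)).
  rewrite /Ls List.in_app_iff; right; rewrite List.in_app_iff; left.
  apply: In_map; apply: In_iota; lia.
have h3 : forall i, (ee <= i <= r - k)%N -> Ihat (q * (1 + 'X) ^+ i) = 0.
  move=> i hi; apply: (hL (F3 i)).
  rewrite /Ls List.in_app_iff; right; rewrite List.in_app_iff; right.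
  apply: In_map; apply: In_iota; lia.
have [s1 e1] := dvd_derivs h1.
have [s2 e2] := dvd_derivs h2.
have dv : ('X - 1%:P) ^+ m2 %| s1 * ('X - (-1)%:P) ^+ m1.
  by rewrite -e1 e2 dvdp_mulIr.
rewrite Gauss_dvdpl in dv; last first.
  apply: coprimep_expl; apply: coprimep_expr; apply: coprimep_XsubC2.
  rewrite -opprD oppr_eq0 -(natrD R 1 1) pnatr_eq0 //.
have [psi1 ep] := dvdpP _ _ dv.
pose sg : R := (-1) ^+ m2.
have sg2 : sg * sg = 1 by rewrite /sg -exprMn mulN1r opprK expr1n.
have sg0 : sg != 0 by rewrite /sg signr_eq0.
pose psi := sg *: psi1.
have eq : q = (1 - 'X) ^+ m2 * (1 + 'X) ^+ m1 * psi.
  rewrite e1 ep -XaddN1 /psi.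
  have -> : (1 - 'X : {poly R}) = (-1) *: ('X - 1%:P).
    by rewrite scaleN1r opprB polyC1.
  rewrite exprZn -/sg -!scalerAl -scalerAr scalerA sg2 scale1r; ring.
have [psi0|psinz] := eqVneq psi 0.
  by rewrite eq psi0 mulr0.
have w0nz : (1 - 'X) ^+ m2 * (1 + 'X) ^+ m1 != 0 :> {poly R}.
  rewrite mulf_eq0 negb_or !expf_neq0 //.
  1,2: apply/negP => /eqP /(congr1 (fun p : {poly R} => p.[0])).
  1,2: rewrite !hornerE /=; lra.
have szw : size ((1 - 'X) ^+ m2 * (1 + 'X) ^+ m1 : {poly R}) = (m1 + m2).+1.
  rewrite (_ : 1 - 'X = (-1) *: ('X - 1%:P)); last by rewrite scaleN1r opprB polyC1.
  rewrite -XaddN1 exprZn -scalerAl size_scale ?signr_eq0 // size_mul.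
  - rewrite !size_exp_XsubC; lia.
  - by rewrite -size_poly_eq0 size_exp_XsubC.
  - by rewrite -size_poly_eq0 size_exp_XsubC.
have szpsi : (size psi + k + ee <= r + 1)%N.
  have := hsz; rewrite eq size_mul // szw.
  have := m12e; move: (size psi) => n; lia.
apply/eqP; rewrite eq mulf_eq0 (negPf w0nz) /=; apply/eqP.
apply: hA1.
  rewrite /inP maxk; move: szpsi; move: (size psi) => n h.
  lia.
move=> phi hphi.
have [->|phinz] := eqVneq phi 0; first by rewrite mulr0 islin0.
rewrite -[k./2]/m2 absfl.
pose phi' := phi \Po ('X + (-1)%:P).
have ephi : phi = \sum_(i < size phi') phi'`_i *: (1 + 'X) ^+ i.
  by rewrite -XaddN1 -comp_polyE comp_polyXaddC_K.
have szphi' : (size phi' <= size phi)%N.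
  apply: leq_trans (size_comp_poly_leq _ _) _; rewrite size_XaddC muln1 prednK //.
  by rewrite size_poly_gt0.
move: hphi; rewrite /inP maxk => hphi.
have hphi2 : (size phi + k + ee <= r + 1)%N by lia.
rewrite ephi mulr_sumr islin_sum //; apply: big1 => i _.
rewrite -scalerAr islinZ //.
have -> : (1 - 'X) ^+ m2 * (1 + 'X) ^+ (m1 + ee) * psi * (1 + 'X) ^+ i = q * (1 + 'X) ^+ (ee + i).
  by rewrite eq !exprD; ring.
rewrite h3 ?mulr0 //.
have := ltn_ord i; lia.
Qed.

End Inj.
Section Transf.
Variable R : realType.
Variables a b : R.
Hypothesis hab : a < b.
Local Notation h := ((b - a) / 2).
Local Notation T := (Tmap a b).

Lemma h_gt0 : 0 < h.
Proof. rewrite divr_gt0 //; (have := hab; lra). Qed.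

Lemma ba0 : b - a != 0.
Proof. by rewrite subr_eq0 gt_eqF. Qed.

Lemma T_deriv : T^`() = h%:P.
Proof. by rewrite /Tmap derivD derivC add0r derivM derivC derivX mul0r add0r mulr1. Qed.

Lemma T_horner x : T.[x] = (a + b) / 2 + h * x.
Proof. by rewrite /Tmap !hornerE. Qed.

Lemma Tm1 : T.[-1] = a.
Proof. by rewrite T_horner; field. Qed.

Lemma T1 : T.[1] = b.
Proof. by rewrite T_horner; field. Qed.

Lemma derivn_compT (p : {poly R}) i : (p \Po T)^`(i) = h ^+ i *: (p^`(i) \Po T).
Proof.
elim: i => [|i IH]; first by rewrite !derivn0 expr0 scale1r.
rewrite derivnS IH derivZ deriv_comp T_deriv [_ * _%:P]mulrC mul_polyC scalerA -exprSr.
by rewrite -derivnS.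
Qed.

Lemma Tinv_comp : Tinv a b \Po T = 'X.
Proof.
rewrite /Tinv /Tmap comp_polyM comp_polyC comp_polyB comp_polyX comp_polyC.
rewrite addrAC subrr add0r mulrA -polyCM.
have -> : 2 / (b - a) * ((b - a) / 2) = 1 by field; rewrite ?andbT; exact: ba0.
by rewrite mul1r.
Qed.

Lemma Tinv_horner t : (Tinv a b).[t] = 2 / (b - a) * (t - (a + b) / 2).
Proof. by rewrite /Tinv !hornerE. Qed.

Lemma T_Tinv t : T.[(Tinv a b).[t]] = t.
Proof. rewrite T_horner Tinv_horner; field; rewrite ?andbT; exact: ba0. Qed.

Lemma Tinv_le1 t : a < t <= b -> `|(Tinv a b).[t]| <= 1.
Proof.
move=> /andP [h1 h2]; rewrite Tinv_horner ler_norml.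
have hb : 0 < b - a by (have := hab; lra).
apply/andP; split.
- rewrite -subr_ge0 (_ : _ - _ = 2 / (b - a) * (t - a)); last by field; rewrite ?andbT; exact: ba0.
  by apply: mulr_ge0; [apply: divr_ge0|]; (have := hab; lra).
- rewrite -subr_ge0 (_ : _ - _ = 2 / (b - a) * (b - t)); last by field; rewrite ?andbT; exact: ba0.
  by apply: mulr_ge0; [apply: divr_ge0|]; (have := hab; lra).
Qed.

Lemma size_compT (p : {poly R}) : (size (p \Po T) <= size p)%N.
Proof.
have [->|pnz] := eqVneq p 0; first by rewrite comp_poly0 size_poly0.
apply: leq_trans (size_comp_poly_leq _ _) _.
have hT : (size T <= 2)%N.
  rewrite /Tmap; apply: leq_trans (size_polyD _ _) _.
  rewrite geq_max size_polyC; apply/andP; split; first by case: (_ != 0).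
  apply: leq_trans (size_polyMleq _ _) _; rewrite size_polyC size_polyX.
  by case: (_ != 0).
have hp : (0 < size p)%N by rewrite size_poly_gt0.
have hT' : ((size T).-1 <= 1)%N by move: hT; lia.
have := leq_mul (leqnn (size p).-1) hT'; lia.
Qed.

End Transf.
Section Anal.
Variable R : realType.
Notation mu := (@lebesgue_measure R).

Lemma cont_poly (p : {poly R}) : continuous (fun t => p.[t]).
Proof. exact: continuous_horner. Qed.

Lemma integ_cont (f : R -> R) (u v : R) : continuous f ->
  mu.-integrable `]u, v] (EFin \o f).
Proof.
move=> cf; apply: (@integrableS _ _ _ mu `[u, v]%classic `]u, v]%classic (EFin \o f)).
- exact: measurable_itv.
- exact: measurable_itv.
- by apply/subset_itvP; exact: subset_itv_oc_cc.
- apply: continuous_compact_integrable; first exact: segment_compact.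
  exact: continuous_subspaceT.
Qed.

Lemma integ_contc (f : R -> R) (u v : R) : continuous f ->
  mu.-integrable `[u, v] (EFin \o f).
Proof.
move=> cf; apply: continuous_compact_integrable; first exact: segment_compact.
exact: continuous_subspaceT.
Qed.

Lemma enorm_horner d (P : 'I_d -> {poly R}) t :
  enorm (evalv P t) = Num.sqrt ((\sum_(j < d) P j * P j).[t]).
Proof.
rewrite /enorm /evalv horner_sum; congr Num.sqrt; apply: eq_bigr => j _.
by rewrite hornerM expr2.
Qed.

Lemma cont_enorm d (P : 'I_d -> {poly R}) : continuous (fun t => enorm (evalv P t)).
Proof.
rewrite (_ : (fun t => _) = Num.sqrt \o horner (\sum_(j < d) P j * P j)); last first.
  by apply/funext => t; rewrite enorm_horner.
move=> t; apply: continuous_comp; first exact: continuous_horner.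
exact: sqrt_continuous.
Qed.

Lemma ftc_poly (p : {poly R}) u v : u < v ->
  \int[mu]_(x in `]u, v]) (p^`()).[x] = p.[v] - p.[u].
Proof.
move=> uv.
rewrite (@Rintegral_itv_obnd_cbnd R u (BRight v) (fun x => (p^`()).[x])); last first.
  have H := @integ_cont (fun x => (p^`()).[x]) u v (@cont_poly p^`()). exact: H.
rewrite /Rintegral (@continuous_FTC2 R (fun x => (p^`()).[x]) (fun x => p.[x])) //.
- exact: continuous_subspaceT (@cont_poly p^`()).
- split.
  + by move=> x _; exact: derivable_horner.
  + by apply: cvg_at_right_filter; exact: continuous_horner.
  + by apply: cvg_at_left_filter; exact: continuous_horner.
- by move=> x _; rewrite -derivE.
Qed.

Lemma integ_enorm d (P : 'I_d -> {poly R}) u v :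
  mu.-integrable `]u, v] (EFin \o (fun x => enorm (evalv P x))).
Proof. exact: integ_cont (@cont_enorm d P). Qed.

Lemma ftc_norm d (P : 'I_d -> {poly R}) u v : u <= v ->
  enorm (fun j => (P j).[v] - (P j).[u]) <=
  \int[mu]_(x in `]u, v]) enorm (evalv (derivv P 1) x).
Proof.
move=> uv.
set I := Rintegral _ _ _.
have I0 : 0 <= I by apply: Rintegral_ge0 => x _; exact: enorm_ge0.
have [euv|uneq] := eqVneq u v.
  rewrite (eq_enorm (v := fun _ => 0)) ?enorm0 // => j; by rewrite euv subrr.
have ltuv : u < v by rewrite lt_def eq_sym uneq uv.
set w := fun j => (P j).[v] - (P j).[u].
pose H := \sum_(j < d) w j *: P j.
have eH : H.[v] - H.[u] = enorm w ^+ 2.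
  rewrite enorm_sq /H !horner_sum -sumrB; apply: eq_bigr => j _.
  by rewrite !hornerZ -mulrBr expr2.
have eH' x : (H^`()).[x] = \sum_(j < d) w j * (evalv (derivv P 1) x) j.
  rewrite /H raddf_sum horner_sum; apply: eq_bigr => j _.
  change (((w j *: P j)^`()).[x] = w j * evalv (derivv P 1) x j).
  by rewrite derivZ hornerZ /evalv /derivv derivn1.
have := ftc_poly H ltuv; rewrite eH => eI.
have hf := integ_enorm (derivv P 1) u v.
have le : \int[mu]_(x in `]u, v]) (H^`()).[x] <=
          \int[mu]_(x in `]u, v]) (enorm w * enorm (evalv (derivv P 1) x)).
  apply: le_Rintegral.
  - exact: measurable_itv.
  - exact: integ_cont (@cont_poly H^`()).
  - have := integrableZl _ (enorm w) hf.
    move=> /(_ (measurable_itv _)).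
    apply: eq_integrable => //= x _; by rewrite EFinM.
  - move=> x _; rewrite eH'; exact: enorm_CS.
have e2 : \int[mu]_(x in `]u, v]) (enorm w * enorm (evalv (derivv P 1) x)) = enorm w * I.
  by apply: RintegralZl => //; exact: measurable_itv.
rewrite e2 eI in le.
have W0 := enorm_ge0 w.
rewrite -/I in le; nra.
Qed.

End Anal.
Unset Implicit Arguments.
Lemma comp_polyXn (R : realType) (p q : {poly R}) n : (p ^+ n) \Po q = (p \Po q) ^+ n.
Proof.
elim: n => [|n IH]; first by rewrite !expr0 -polyC1 comp_polyC.
by rewrite !exprS comp_polyM IH.
Qed.

Theorem mainTheorem4 (R : realType) (Ihat : {poly R} -> R)
  (Ihat_lin : forall (c : R) (p q : {poly R}), Ihat (c *: p + q) = c * Ihat p + Ihat q)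
  (r k : nat) (hkr : (k <= r)%N) (hA1 : A1 Ihat r k) :
  exists kappa : R, 0 < kappa /\
  forall (d : nat) (a b : R), a < b -> b - a <= 1 ->
  forall phi : 'I_d -> {poly R}, (forall j, inP r%:Z (phi j)) ->
    let tau := b - a in
    let intdphi :=
      \int[lebesgue_measure]_(t in `]a, b]) enorm (evalv (derivv phi 1) t) in
    [/\ intdphi <= tau * sup [set enorm (evalv (derivv phi 1) t) | t in `]a, b]],
        tau * sup [set enorm (evalv (derivv phi 1) t) | t in `]a, b]]
          <= kappa *
             (\sum_(1 <= i < (posn (floor2 (k%:Z - 1))).+1)
                 (tau / 2) ^+ i * enorm (evalv (derivv phi i) a)
              + \sum_(1 <= i < (k./2).+1)
                 (tau / 2) ^+ i * enorm (evalv (derivv phi i) b)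
              + \sum_((k == 0%N) <= i < (r - k).+1)
                 enorm (fun j => locI Ihat a b
                          ((phi j)^`() * (1 + Tinv a b) ^+ i)))
      & sup [set enorm (evalv phi t) | t in `]a, b]]
          <= Num.min (enorm (evalv phi a)) (enorm (evalv phi b)) + intdphi].
Proof.
have Il : islin Ihat := Ihat_lin.
have [C [C0 hC]] := normeq (@Ls_lin R Ihat Il r k) (@Ls_inj R Ihat Il r k hkr hA1).
exists (2 * C + 1); split; first by rewrite ltr_wpDl ?mulr_ge0.
move=> d a b hab hba phi hphi tau intdphi.
rewrite {}/tau {}/intdphi.
set h := (b - a) / 2.
have h0 : 0 < h by rewrite /h divr_gt0 //; lra.
set T := Tmap a b.
pose q j := (phi j \Po T)^`().
have hq j : (size (q j) <= r)%N.
  have h1 : (size (phi j) <= r.+1)%N by move: (hphi j); rewrite /inP; lia.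
  have h2 := size_compT hab (phi j); rewrite -/T in h2.
  rewrite /q; have [->|nz] := eqVneq (phi j \Po T) 0; first by rewrite deriv0 size_poly0.
  have := lt_size_deriv nz; lia.
have qE j : q j = h *: ((phi j)^`() \Po T).
  by rewrite /q -derivn1 derivn_compT expr1 derivn1.
set f := fun t => enorm (evalv (derivv phi 1) t).
have eRHS : \sum_(L <- Ls Ihat r k) enorm (fun j => L (q j)) =
  \sum_(1 <= i < (posn (floor2 (k%:Z - 1))).+1) h ^+ i * enorm (evalv (derivv phi i) a) +
  \sum_(1 <= i < (k./2).+1) h ^+ i * enorm (evalv (derivv phi i) b) +
  \sum_((k == 0%N) <= i < (r - k).+1)
     enorm (fun j => locI Ihat a b ((phi j)^`() * (1 + Tinv a b) ^+ i)).
  rewrite /Ls !big_cat /= !big_map addrA; congr (_ + _ + _).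
  - apply: eq_big_seq => i; rewrite mem_index_iota => /andP [i1 _].
    rewrite -[h ^+ i]ger0_norm ?exprn_ge0 ?ltW // -enormZ; apply: eq_enorm => j.
    rewrite /F1 /evalv /derivv; case: i i1 => // i _.
    by rewrite /q /= -derivSn derivn_compT hornerZ horner_comp Tm1.
  - apply: eq_big_seq => i; rewrite mem_index_iota => /andP [i1 _].
    rewrite -[h ^+ i]ger0_norm ?exprn_ge0 ?ltW // -enormZ; apply: eq_enorm => j.
    rewrite /F2 /evalv /derivv; case: i i1 => // i _.
    by rewrite /q /= -derivSn derivn_compT hornerZ horner_comp T1.
  - apply: eq_big_seq => i _; apply: eq_enorm => j.
    rewrite /F3 qE /locI comp_polyM comp_polyXn comp_polyD -polyC1 comp_polyC polyC1.
    by rewrite Tinv_comp // -scalerAl islinZ.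
set SumL := \sum_(L <- Ls Ihat r k) enorm (fun j => L (q j)).
have SumL0 : 0 <= SumL by apply: sumr_ge0 => L _; exact: enorm_ge0.
rewrite -eRHS -/SumL.
have bound t : a < t <= b -> (b - a) * f t <= 2 * C * SumL.
  move=> ht; set x := (Tinv a b).[t].
  have hx := Tinv_le1 hab ht.
  have hcx := hC d q hq x hx.
  have ef : f t = h^-1 * enorm (evalv q x).
    rewrite -[h^-1]ger0_norm ?invr_ge0 ?ltW // -enormZ /f; apply: eq_enorm => j.
    rewrite /evalv qE hornerZ horner_comp T_Tinv // /derivv derivn1 mulKf //.
    by rewrite gt_eqF.
  have e2 : (b - a) * h^-1 = 2 by rewrite /h; field; rewrite ?andbT subr_eq0 gt_eqF.
  by rewrite ef mulrA e2 -mulrA ler_pM2l.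
have ba0 : 0 < b - a by rewrite subr_gt0.
set S := [set f x | x in `]a, b]].
have Sne : S !=set0 by exists (f b), b => //=; rewrite in_itv /= hab lexx.
have Sub : ubound S (2 * C * SumL / (b - a)).
  move=> y [t ht <-]; rewrite ler_pdivlMr // mulrC; apply: bound.
  by move: ht; rewrite /= in_itv.
have Ssup : has_sup S by split => //; exists (2 * C * SumL / (b - a)).
split.
- have fle t : a < t <= b -> f t <= sup S.
    by move=> ht; apply: sup_upper_bound => //; exists t => //=; rewrite in_itv.
  have e : \int[lebesgue_measure]_(x in `]a, b]) (sup S) = sup S * (b - a).
    rewrite Rintegral_cst; last exact: measurable_itv.
    have := @lebesgue_measure_itv R `]a, b]; rewrite /= lte_fin hab => ->.
    by [].
  rewrite mulrC -e /f; apply: le_Rintegral.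
  - exact: measurable_itv.
  - have H := integ_enorm (derivv phi 1) a b; exact: H.
  - have H := @integ_cont R (fun _ => sup S) a b (@cst_continuous R R (sup S)); exact: H.
  - by move=> x hx; apply: fle; move: hx; rewrite /= in_itv.
- have hs : sup S <= 2 * C * SumL / (b - a) := ge_sup Sne Sub.
  rewrite ler_pdivlMr // in hs.
  apply: le_trans (_ : _ <= 2 * C * SumL) _; first by rewrite mulrC.
  by rewrite ler_wpM2r // lerDl.
- rewrite /f; set I := Rintegral _ _ _.
  apply: ge_sup.
    by exists (enorm (evalv phi b)), b => //=; rewrite in_itv /= hab lexx.
  move=> y [t ht <-]; move: ht; rewrite /= in_itv /= => /andP [ht1 ht2].
  have i1 := ftc_norm phi (ltW ht1).
  have i2 := ftc_norm phi ht2.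
  set I1 := (X in _ <= X) in i1.
  set I2 := (X in _ <= X) in i2.
  have I10 : 0 <= I1 by apply: Rintegral_ge0 => x _; exact: enorm_ge0.
  have I20 : 0 <= I2 by apply: Rintegral_ge0 => x _; exact: enorm_ge0.
  have eI : I - I1 = I2.
    apply: Rintegral_itvB.
    - have H := integ_enorm (derivv phi 1) a b; exact: H.
    - by rewrite bnd_simp ltW.
    - by rewrite bnd_simp.
  have ta : enorm (evalv phi t) <= enorm (evalv phi a) + enorm (fun j => (phi j).[t] - (phi j).[a]).
    rewrite (eq_enorm (v := fun j => evalv phi a j + ((phi j).[t] - (phi j).[a]))).
      exact: enormD.
    by move=> j; rewrite /evalv addrC subrK.
  have tb : enorm (evalv phi t) <= enorm (evalv phi b) + enorm (fun j => (phi j).[b] - (phi j).[t]).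
    rewrite (eq_enorm (v := fun j => evalv phi b j + (-1) * ((phi j).[b] - (phi j).[t]))).
      by apply: le_trans (enormD _ _) _; rewrite enormZ normrN1 mul1r.
    by move=> j; rewrite /evalv mulN1r opprB addrC subrK.
  rewrite -lerBlDr le_min; apply/andP; split; lra.
Qed.
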